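(* Let $\{\tau_n\}$ be a nonnegative sequence and $\{b_n\}$ a strictly positive non-decreasing sequence. Let $X$ be a random variable with $\sum_{n=1}^\infty\tau_nnP(|X|\ge b_n)<\infty$. Fix $\nu\in[0,\infty)$ and put $T_k=\sum_{n=1}^kn\tau_n$. Suppose there are constants $C\in(0,\infty)$ and $\theta\in[1,\infty)$ such that $$\frac{b_n^{\nu\theta}}{n^{\theta-1}}\sum_{k=n}^\infty\frac{k^\theta\tau_k}{b_k^{\nu\theta}}\le CT_{n-1}\quad\text{for all }n\ge2,$$ and $$\frac{kb_n^\nu}{b_k^\nu}\le CT_{n-1}\quad\text{whenever }k\ge n\ge2.$$ Then $$\sum_{n=1}^\infty\tau_n\left(\frac{nE[|X|^\nu1_{\{|X|<b_n\}}]}{b_n^\nu}\right)^{\theta}<\infty.$$ *)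

(* Defs.v *)
From HB Require Import structures.
From mathcomp Require Import all_boot all_order all_algebra.
From mathcomp Require Import all_classical all_reals all_analysis.
Set Implicit Arguments. Unset Strict Implicit. Unset Printing Implicit Defensive.
Import Order.TTheory GRing.Theory Num.Theory.
Local Open Scope ring_scope.

Definition Tsum (R : realType) (tau : nat -> R) (k : nat) : R :=
  \sum_(1 <= n < k.+1) (n%:R * tau n).

(* E[|X|^nu 1_{|X| < c}] (finite, as the integrand is bounded by c^nu) *)
Definition trunc_moment (d : measure_display) (T : measurableType d)
  (R : realType) (P : probability T R) (X : {RV P >-> R}) (nu c : R) : R :=
  fine (\int[P]_x ((powR `|X x| nu * (`|X x| < c)%R%:R)%R)%:E)%E.

(* Main.v *)
Require Import Defs.
From HB Require Import structures.
From mathcomp Require Import all_boot all_order all_algebra.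
From mathcomp Require Import all_classical all_reals all_analysis.
From mathcomp Require Import ring lra.
From mathcomp Require Import measurable_realfun lebesgue_integral_theory.lebesgue_integral_nonneg.
Import Order.TTheory GRing.Theory Num.Theory.
Local Open Scope ring_scope.
Local Open Scope classical_set_scope.


Lemma bern {R : realType} (th u v : R) : 1 <= th -> 0 <= u -> 0 <= v ->
  powR v th - powR u th <= th * (v - u) * powR v (th - 1).
Proof.
move=> th1 u0 v0.
have [->|th1'] := eqVneq th 1.
  by rewrite subrr powRr0 !powRr1 // mul1r mulr1.
have thgt1 : 1 < th by rewrite lt_neqAle eq_sym th1' th1.
have th0 : 0 < th by lra.
have thm0 : 0 < th - 1 by rewrite subr_gt0.
set w := powR v (th - 1).
have w0 : 0 <= w by exact: powR_ge0.
have q0 : 0 < th / (th - 1) by apply: divr_gt0.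
have pq : th^-1 + (th / (th - 1))^-1 = 1.
  by rewrite invf_div; field; rewrite gt_eqF.
have Y := conjugate_powR u0 w0 th0 q0 pq.
have E1 : powR w (th / (th - 1)) = powR v th.
  by rewrite /w -powRrM mulrC divfK // gt_eqF.
have E2 : powR v th = v * w by rewrite /w mulr_powRB1.
rewrite E1 E2 in Y; rewrite E2.
have Y2 : th * (u * w) <= powR u th + (th - 1) * (v * w).
  have := ler_wpM2l (ltW th0) Y.
  suff -> : th * (powR u th / th + v * w / (th / (th - 1))) = powR u th + (th - 1) * (v * w) by [].
  field; rewrite ?gt_eqF // ?andbT.
nra.
Qed.

Lemma exch {R : realType} (G : nat -> nat -> R) m :
  \sum_(1 <= n < m) \sum_(1 <= j < n.+1) G n j =
  \sum_(1 <= j < m) \sum_(j <= n < m) G n j.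
Proof.
elim: m => [|m IH]; first by rewrite !big_geq.
case: m IH => [|m] IH; first by rewrite !big_geq.
rewrite big_nat_recr //= IH.
rewrite [in RHS]big_nat_recr //= big_nat1.
rewrite [X in _ = X + _](_ : _ = \sum_(1 <= j < m.+1) (\sum_(j <= n < m.+1) G n j + G m.+1 j)); last first.
  by apply: eq_big_nat => j /andP[_ jm]; rewrite big_nat_recr // ltnW.
rewrite big_split /= -addrA; congr (_ + _).
by rewrite big_nat_recr.
Qed.

Lemma bern_sum {R : realType} (th : R) (x : nat -> R) n : 1 <= th ->
  (forall j, (1 <= j)%N -> 0 <= x j) ->
  powR (\sum_(1 <= j < n.+1) x j) th <=
  th * \sum_(1 <= j < n.+1) x j * powR (\sum_(1 <= i < j.+1) x i) (th - 1).
Proof.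
move=> th1 x0.
have S0 k : 0 <= \sum_(1 <= j < k) x j.
  by rewrite big_nat; apply: sumr_ge0 => i /andP[/x0].
elim: n => [|n IH].
  rewrite !big_geq // mulr0 powR0 // gt_eqF //; exact: (lt_le_trans ltr01 th1).
set a := \sum_(1 <= j < n.+1) x j in IH *.
have Eb : \sum_(1 <= j < n.+2) x j = a + x n.+1 by rewrite big_nat_recr.
have H := @bern _ th _ _ th1 (S0 n.+1) (S0 n.+2).
rewrite -/a Eb in H.
rewrite Eb big_nat_recr //= Eb mulrDr.
have E : a + x n.+1 - a = x n.+1 by ring.
rewrite E in H.
have : powR (a + x n.+1) th <= powR a th + th * x n.+1 * powR (a + x n.+1) (th - 1).
  by rewrite -lerBlDl.
move=> H2; apply: (le_trans H2); rewrite -mulrA lerD2r; exact: IH.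
Qed.

Lemma tele_T {R : realType} (tau F : nat -> R) M :
  (forall n, (1 <= n)%N -> 0 <= tau n) -> (forall n, F n <= 1) ->
  (forall m, \sum_(1 <= n < m) n%:R * tau n * (1 - F n) <= M) ->
  forall m, \sum_(2 <= i < m) (F i - F i.-1) * Tsum tau i.-1 <= M.
Proof.
move=> tau0 F1 HM.
have E m : \sum_(2 <= i < m.+1) (F i - F i.-1) * Tsum tau i.-1 =
           \sum_(1 <= n < m.+1) n%:R * tau n * (F m - F n).
  elim: m => [|m IH]; first by rewrite !big_geq.
  case: m IH => [|m] IH.
    by rewrite big_geq // big_nat1 subrr mulr0.
  rewrite big_nat_recr //= IH.
  rewrite [in RHS]big_nat_recr //= subrr mulr0 addr0.
  rewrite /Tsum mulr_sumr -big_split /=.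
  by apply: eq_big_nat => n _; ring.
move=> [|m]; first by rewrite big_geq //; have := HM 0%N; rewrite big_geq.
rewrite E; apply: le_trans (HM m.+1); apply: ler_sum_nat => n /andP[n1 _].
apply: ler_wpM2l; first by rewrite mulr_ge0 // tau0.
by rewrite lerD2r.
Qed.

Lemma core {R : realType} (tau c F e : nat -> R) (C th M : R) :
  (forall n, (1 <= n)%N -> 0 <= tau n) ->
  (forall n, (1 <= n)%N -> 0 < c n) ->
  c 1%N <= c 2%N ->
  (forall n, F n <= F n.+1) -> (forall n, F n <= 1) -> (forall n, 0 <= F n) ->
  (forall n, (1 <= n)%N -> 0 <= e n <= \sum_(1 <= j < n.+1) c j * (F j - F j.-1)) ->
  0 < C -> 1 <= th ->
  (forall j m, (2 <= j)%N -> \sum_(j <= k < m) tau k * powR (k%:R / c k) th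
       <= C * Tsum tau j.-1 * powR (j%:R / c j) (th - 1) / c j) ->
  (forall i j, (2 <= i)%N -> (i <= j)%N -> j%:R * c i / c j <= C * Tsum tau i.-1) ->
  (forall m, \sum_(1 <= n < m) n%:R * tau n * (1 - F n) <= M) ->
  exists K, forall m, \sum_(1 <= n < m) tau n * powR (n%:R * e n / c n) th <= K.
Proof.
move=> tau0 c0 c12 Fmon F1 F0 eb C0 th1 H1 H2 HM.
have th0 : 0 <= th by lra.
set p := fun j => F j - F j.-1.
have p0 j : 0 <= p j.
  by case: j => [|j]; rewrite /p /= ?subrr // subr_ge0.
have p1 : p 1%N <= 1 by rewrite /p /=; have := F0 0%N; have := F1 1%N; lra.
set x := fun j => c j * p j.
have x0 j : (1 <= j)%N -> 0 <= x j by move=> j1; rewrite mulr_ge0 // ltW // c0.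
set S := fun j => \sum_(1 <= i < j.+1) x i.
have S0 j : 0 <= S j by rewrite /S big_nat; apply: sumr_ge0 => i /andP[/x0].
set r := fun n => n%:R / c n.
have r0 n : (1 <= n)%N -> 0 <= r n by move=> n1; rewrite divr_ge0 // ltW // c0.
have HT := @tele_T _ tau F M tau0 F1 HM.
have M0 : 0 <= M by have := HM 0%N; rewrite big_geq.
have T0 k : 0 <= Tsum tau k.
  rewrite /Tsum big_nat; apply: sumr_ge0 => i /andP[i1 _].
  by rewrite mulr_ge0 // tau0.
set K2 := C * Tsum tau 1%N + C * M.
have K20 : 0 <= K2 by rewrite addr_ge0 // mulr_ge0 // ltW.
have rS j : (2 <= j)%N -> r j * S j <= K2.
  move=> j2; rewrite /S mulr_sumr big_ltn; last exact: leq_trans j2 (leqnSn j).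
  rewrite /K2; apply: lerD.
    have := H2 2%N j isT j2.
    have cj := c0 j (ltnW j2).
    have Hc : j%:R * c 1%N / c j <= j%:R * c 2%N / c j.
      by apply: ler_wpM2r; [rewrite invr_ge0 ltW | apply: ler_wpM2l].
    have Hp : r j * x 1%N = (j%:R * c 1%N / c j) * p 1%N.
      by rewrite /r /x; field; rewrite gt_eqF.
    rewrite Hp => H; apply: le_trans (H).
    apply: le_trans Hc; rewrite -[leRHS]mulr1; apply: ler_wpM2l => //.
    have c1 := c0 1%N isT; apply: mulr_ge0; [apply: mulr_ge0 => //; exact: ltW c1 | by rewrite invr_ge0 ltW].
  apply: le_trans (_ : \sum_(2 <= i < j.+1) C * (p i * Tsum tau i.-1) <= _).
    apply: ler_sum_nat => i /andP[i2 ij].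
    have := H2 i j i2 ij.
    have ci := c0 i (ltnW i2).
    have cj := c0 j (ltnW (leq_trans i2 ij)).
    have -> : r j * x i = (j%:R * c i / c j) * p i.
      by rewrite /r /x; field; rewrite gt_eqF.
    have -> : C * (p i * Tsum tau i.-1) = C * Tsum tau i.-1 * p i by ring.
    by move=> H; apply: ler_wpM2r.
  by rewrite -mulr_sumr; apply: ler_wpM2l; [exact: ltW | exact: HT].
set K1 := tau 1%N * powR (r 1%N) th + C * Tsum tau 1%N * powR (r 2%N) (th - 1) / c 2%N.
have K10 : 0 <= K1.
  apply: addr_ge0; first by rewrite mulr_ge0 ?tau0 ?powR_ge0.
  by rewrite !mulr_ge0 ?T0 ?powR_ge0 // ?invr_ge0 ?ltW // c0.
have G1 m : \sum_(1 <= n < m) tau n * powR (r n) th <= K1.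
  case: m => [|[|m]]; try by rewrite big_geq //; exact: K10.
  by rewrite big_ltn // /K1 lerD2l; exact: H1.
set K := th * (x 1%N * powR (S 1%N) (th - 1) * K1 + C * powR K2 (th - 1) * M).
exists K => m.
apply: le_trans (_ : \sum_(1 <= n < m) tau n * powR (r n) th *
    (th * \sum_(1 <= j < n.+1) x j * powR (S j) (th - 1)) <= _).
  apply: ler_sum_nat => n /andP[n1 _]; rewrite -[X in _ <= X]mulrA; apply: ler_wpM2l; first exact: tau0.
  have /andP[e0 eS] := eb n n1.
  have -> : n%:R * e n / c n = r n * e n by rewrite /r mulrAC.
  apply: le_trans (_ : powR (r n * S n) th <= _).
    apply: ge0_ler_powR => //; rewrite ?nnegrE.
    - by apply: mulr_ge0; [exact: r0 | exact: e0].
    - by apply: mulr_ge0; [exact: r0 | exact: S0].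
    - by apply: ler_wpM2l; [exact: r0 | exact: eS].
  rewrite powRM ?r0 //; apply: ler_wpM2l; first exact: powR_ge0.
  exact: bern_sum.
have -> : \sum_(1 <= n < m) tau n * powR (r n) th *
    (th * \sum_(1 <= j < n.+1) x j * powR (S j) (th - 1)) =
    th * \sum_(1 <= j < m) x j * powR (S j) (th - 1) * \sum_(j <= n < m) tau n * powR (r n) th.
  transitivity (\sum_(1 <= n < m) \sum_(1 <= j < n.+1)
      th * (x j * powR (S j) (th - 1) * (tau n * powR (r n) th))).
    by apply: eq_big_nat => n _; rewrite !mulr_sumr; apply: eq_big_nat => j _; ring.
  rewrite exch mulr_sumr; apply: eq_big_nat => j _; rewrite !mulr_sumr.
  by apply: eq_big_nat => n _; ring.
apply: ler_wpM2l => //.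
have KK0 : 0 <= x 1%N * powR (S 1%N) (th - 1) * K1 + C * powR K2 (th - 1) * M.
  apply: addr_ge0; apply: mulr_ge0 => //; apply: mulr_ge0; rewrite ?powR_ge0 //; [exact: x0 | exact: ltW].
case: m => [|[|m]]; try by rewrite big_geq //; exact: KK0.
rewrite big_ltn //; apply: lerD.
  by apply: ler_wpM2l; [rewrite mulr_ge0 ?x0 ?powR_ge0 | exact: G1].
apply: le_trans (_ : \sum_(2 <= j < m.+2) C * powR K2 (th - 1) * (p j * Tsum tau j.-1) <= _); last first.
  by rewrite -mulr_sumr; apply: ler_wpM2l; [rewrite mulr_ge0 ?powR_ge0 // ltW | exact: HT].
apply: ler_sum_nat => j /andP[j2 _].
have cj := c0 j (ltnW j2).
apply: le_trans (_ : x j * powR (S j) (th - 1) *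
   (C * Tsum tau j.-1 * powR (j%:R / c j) (th - 1) / c j) <= _).
  by apply: ler_wpM2l; [rewrite mulr_ge0 ?x0 ?powR_ge0 // ltnW | exact: H1].
have -> : x j * powR (S j) (th - 1) * (C * Tsum tau j.-1 * powR (j%:R / c j) (th - 1) / c j)
   = C * (p j * Tsum tau j.-1) * powR (r j * S j) (th - 1).
  by rewrite (powRM _ (r0 j (ltnW j2)) (S0 j)) /x /r; field; rewrite gt_eqF.
rewrite (mulrAC C (powR K2 _)); apply: ler_wpM2l.
  by rewrite !mulr_ge0 // ltW.
apply: ge0_ler_powR; rewrite ?nnegrE ?subr_ge0 //; first by apply: mulr_ge0; [exact: r0 (ltnW j2) | exact: S0].
exact: rS.
Qed.
Lemma mU {d : measure_display} {T : measurableType d} {R : realType}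
  {P : probability T R} (X : {RV P >-> R}) (c : R) :
  measurable [set x | `|X x| < c].
Proof.
have mX : measurable_fun setT (fun x => `|X x|).
  exact: measurableT_comp (@measurable_realfun.normr_measurable R setT) (@measurable_funP _ _ _ _ setT X).
have := mX measurableT `]-oo, c[ (measurable_itv _).
rewrite setTI; congr measurable; apply/seteqP; split => x /=;
  by rewrite in_itv /=.
Qed.

Lemma powR_inv (R : realType) (x r : R) : 0 < x -> powR (x^-1) r = (powR x r)^-1.
Proof.
by move=> x0; rewrite /powR invr_eq0 gt_eqF // lnV ?posrE // mulrN expRN.
Qed.

Lemma powR_div (R : realType) (x y r : R) : 0 <= x -> 0 < y ->
  powR (x / y) r = powR x r / powR y r.
Proof.
move=> x0 y0; rewrite powRM //; last by rewrite invr_ge0 ltW.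
by rewrite (@powR_inv _ y r y0).
Qed.

Definition Bseq {R : realType} (b : nat -> R) (k : nat) : R :=
  if k is 0 then 0 else b k.

Definition Useq {d} {T : measurableType d} {R : realType} {P : probability T R}
  (X : {RV P >-> R}) (b : nat -> R) (k : nat) : set T :=
  [set x | `|X x| < Bseq b k].

Definition Fseq {d} {T : measurableType d} {R : realType} {P : probability T R}
  (X : {RV P >-> R}) (b : nat -> R) (k : nat) : R :=
  fine (P (Useq X b k)).

Lemma Bseq_mon (R : realType) (b : nat -> R) k :
  (forall n, (1 <= n)%N -> 0 < b n) ->
  (forall m n, (1 <= m)%N -> (m <= n)%N -> b m <= b n) ->
  Bseq b k <= Bseq b k.+1.
Proof.
move=> b0 bmon; case: k => [|k] /=; first exact: ltW (b0 1%N isT).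
exact: bmon.
Qed.

Lemma PA d (T : measurableType d) (R : realType) (P : probability T R)
  (X : {RV P >-> R}) (b : nat -> R) j :
  (forall n, (1 <= n)%N -> 0 < b n) ->
  (forall m n, (1 <= m)%N -> (m <= n)%N -> b m <= b n) -> (1 <= j)%N ->
  P (Useq X b j `\` Useq X b j.-1) = (Fseq X b j - Fseq X b j.-1)%:E.
Proof.
move=> b0 bmon j1.
have sub : Useq X b j.-1 `<=` Useq X b j.
  move=> x /= H; apply: lt_le_trans H _.
  by case: j j1 => [//|j] _ /=; apply: Bseq_mon.
have mUs k : measurable (Useq X b k) := mU X (Bseq b k).
have := measureDI P (mUs j) (mUs j.-1).
rewrite setIidr // => E.
rewrite /Fseq EFinB !fineK ?fin_num_measure // E addeK // fin_num_measure //.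
Qed.

Lemma ptw (R : realType) (b : nat -> R) (nu y : R) n :
  0 <= nu -> (forall n, (1 <= n)%N -> 0 < b n) -> 0 <= y -> y < Bseq b n ->
  powR y nu <= \sum_(1 <= j < n.+1)
     powR (b j) nu * ((y < Bseq b j) && ~~ (y < Bseq b j.-1))%:R.
Proof.
move=> nu0 b0 y0; elim: n => [|n IH].
  by move=> h; have := lt_le_trans h y0; rewrite ltxx.
move=> h; rewrite big_nat_recr //=.
have S0 : 0 <= \sum_(1 <= j < n.+1)
     powR (b j) nu * ((y < Bseq b j) && ~~ (y < Bseq b j.-1))%:R.
  by rewrite big_nat; apply: sumr_ge0 => i _; rewrite mulr_ge0 ?powR_ge0.
case: (boolP (y < Bseq b n)) => hn.
  apply: le_trans (IH hn) _; rewrite lerDl.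
  by rewrite mulr_ge0 ?powR_ge0.
rewrite h /= mulr1; apply: ler_wpDl => //.
apply: ge0_ler_powR => //; rewrite ?nnegrE //; [exact: ltW (b0 n.+1 isT) | exact: ltW h].
Qed.

Lemma indic_bool {T : Type} {R : realType} (p : T -> bool) x :
  \1_[set y | p y] x = (p x)%:R :> R.
Proof.
rewrite indicE; case: (boolP (p x)) => H; first by rewrite mem_set.
by rewrite memNset //=; apply/negP.
Qed.

Lemma indic_U d (T : measurableType d) (R : realType) (P : probability T R)
  (X : {RV P >-> R}) (b : nat -> R) j x :
  \1_(Useq X b j `\` Useq X b j.-1) x =
  ((`|X x| < Bseq b j) && ~~ (`|X x| < Bseq b j.-1))%:R :> R.
Proof.
rewrite -(indic_bool (fun x => (`|X x| < Bseq b j) && ~~ (`|X x| < Bseq b j.-1))).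
congr (\1_ _ x); apply/seteqP; split => y /=.
  by move=> [-> /negP ->].
by move=> /andP[h1 /negP h2]; split.
Qed.

Lemma ebound d (T : measurableType d) (R : realType) (P : probability T R)
  (X : {RV P >-> R}) (b : nat -> R) (nu : R) n :
  0 <= nu -> (forall n, (1 <= n)%N -> 0 < b n) ->
  (forall m n, (1 <= m)%N -> (m <= n)%N -> b m <= b n) -> (1 <= n)%N ->
  0 <= trunc_moment X nu (b n) <=
  \sum_(1 <= j < n.+1) powR (b j) nu * (Fseq X b j - Fseq X b j.-1).
Proof.
move=> nu0 b0 bmon n1.
have mUs k : measurable (Useq X b k) := mU X (Bseq b k).
set A := fun j => Useq X b j `\` Useq X b j.-1.
have mA j : measurable (A j) by apply: measurableD.
have mX : measurable_fun setT (fun x => `|X x|).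
  exact: measurableT_comp (@measurable_realfun.normr_measurable R setT) (@measurable_funP _ _ _ _ setT X).
pose g : T -> \bar R := fun x => (powR `|X x| nu * (`|X x| < b n)%R%:R)%:E.
pose h : T -> \bar R := fun x => (\sum_(1 <= j < n.+1) (powR (b j) nu * \1_(A j) x)%:E)%E.
have g0 x : (0 <= g x)%E by rewrite lee_fin mulr_ge0 ?powR_ge0.
have mg : measurable_fun setT g.
  rewrite /g; apply/measurable_realfun.measurable_EFinP.
  apply: measurable_realfun.measurable_funM.
    exact: (@measurableT_comp _ _ _ _ _ _ (fun y : R => powR y nu) setT (fun x => `|X x|) (@measurable_powR R nu) mX).
  have -> : (fun x => (`|X x| < b n)%R%:R) = \1_[set x | `|X x| < b n] :> (T -> R).
    by apply/funext => x; rewrite indic_bool.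
  exact: measurable_realfun.measurable_indic (mU X (b n)).
have mh0 j : measurable_fun setT (fun x => (powR (b j) nu * \1_(A j) x)%:E).
  apply/measurable_realfun.measurable_EFinP.
  apply: measurable_realfun.measurable_funM; first exact: measurable_cst.
  exact: measurable_realfun.measurable_indic.
have mh : measurable_fun setT h by apply: emeasurable_sum.
have Hle : (\int[P]_x g x <= \int[P]_x h x)%E.
  apply: ge0_le_integral => // x _.
  rewrite /g /h sumEFin lee_fin.
  have S0 : 0 <= \sum_(1 <= j < n.+1) powR (b j) nu * \1_(A j) x.
    by rewrite big_nat; apply: sumr_ge0 => i _; rewrite mulr_ge0 ?powR_ge0.
  case: (boolP (`|X x| < b n)) => hx; last by rewrite mulr0.
  rewrite mulr1.
  under eq_big_nat => j _ do rewrite /A indic_U.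
  apply: ptw => //.
  have -> : Bseq b n = b n by case: (n) n1.
  exact: hx.
have Hh : (\int[P]_x h x = (\sum_(1 <= j < n.+1) powR (b j) nu * (Fseq X b j - Fseq X b j.-1))%:E)%E.
  rewrite /h ge0_integral_sum //; last first.
    by move=> j x _; rewrite lee_fin mulr_ge0 ?powR_ge0.
  rewrite -sumEFin; apply: eq_big_nat => j /andP[j1 _].
  rewrite (integralZl_indic _ (fun _ => A j)) //; last first.
    by move=> k; have := powR_ge0 (b j) nu; rewrite leNgt k.
  by rewrite integral_indic // setIT /A EFinM; congr (_ * _)%E; exact: PA.
have I0 : (0 <= \int[P]_x g x)%E by apply: integral_ge0 => x _.
rewrite /trunc_moment -/g fine_ge0 //=.
have fg : (\int[P]_x g x)%E \is a fin_num.
  by rewrite ge0_fin_numE // (le_lt_trans Hle) // Hh ltry.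
have H2 : (\int[P]_x g x <= (\sum_(1 <= j < n.+1) powR (b j) nu * (Fseq X b j - Fseq X b j.-1))%:E)%E.
  by rewrite -Hh.
exact: (fine_le fg _ H2).
Qed.

Theorem lemma5 (d : measure_display) (T : measurableType d) (R : realType)
  (P : probability T R) (X : {RV P >-> R}) (tau b : nat -> R) (nu C theta : R) :
  (forall n, (1 <= n)%N -> 0 <= tau n) ->
  (forall n, (1 <= n)%N -> 0 < b n) ->
  (forall m n, (1 <= m)%N -> (m <= n)%N -> b m <= b n) ->
  (\sum_(1 <= n <oo) ((tau n * n%:R)%:E * P [set x | (b n <= `|X x|)%R]) < +oo)%E ->
  0 <= nu -> 0 < C -> 1 <= theta ->
  (forall n, (2 <= n)%N ->
     ((powR (b n) (nu * theta) / powR n%:R (theta - 1))%:E *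
      \sum_(n <= k <oo) ((powR k%:R theta * tau k / powR (b k) (nu * theta))%:E)
      <= (C * Tsum tau n.-1)%:E)%E) ->
  (forall n k, (2 <= n)%N -> (n <= k)%N ->
     k%:R * powR (b n) nu / powR (b k) nu <= C * Tsum tau n.-1) ->
  (\sum_(1 <= n <oo)
     ((tau n * powR (n%:R * trunc_moment X nu (b n) / powR (b n) nu) theta)%:E)
   < +oo)%E.
Proof.
move=> tau0 b0 bmon Hser nu0 C0 th1 H1e H2.
have th0 : 0 < theta by lra.
have mUs k : measurable (Useq X b k) := mU X (Bseq b k).
have c0 n : (1 <= n)%N -> 0 < powR (b n) nu by move=> n1; exact: powR_gt0 (b0 n n1).
have c12 : powR (b 1%N) nu <= powR (b 2%N) nu.
  apply: ge0_ler_powR; rewrite ?nnegrE //; first exact: ltW (b0 1%N isT).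
    exact: ltW (b0 2%N isT).
  exact: bmon.
have Fmon k : Fseq X b k <= Fseq X b k.+1.
  apply: fine_le; rewrite ?fin_num_measure //.
  apply: le_measure; rewrite ?inE //.
  move=> x /= h; apply: lt_le_trans h _; exact: Bseq_mon.
have F1 k : Fseq X b k <= 1.
  have := probability_le1 P (mUs k).
  by rewrite -lee_fin /Fseq fineK ?fin_num_measure.
have F0 k : 0 <= Fseq X b k by apply: fine_ge0; exact: measure_ge0.
set Ser := (\sum_(1 <= n <oo) ((tau n * n%:R)%:E * P [set x | (b n <= `|X x|)%R]))%E.
have Ser0 : (0 <= Ser)%E.
  apply: nneseries_ge0 => n n1 _; apply: mule_ge0; last exact: measure_ge0.
  by rewrite lee_fin mulr_ge0 ?tau0.
have finSer : Ser \is a fin_num by rewrite ge0_fin_numE.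
have HM m : \sum_(1 <= n < m) n%:R * tau n * (1 - Fseq X b n) <= fine Ser.
  have E n : (1 <= n)%N -> ((tau n * n%:R)%:E * P [set x | (b n <= `|X x|)%R])%E =
      (n%:R * tau n * (1 - Fseq X b n))%:E.
    move=> n1.
    have -> : [set x | (b n <= `|X x|)%R] = ~` Useq X b n.
      apply/seteqP; split => x /=; rewrite /Useq /Bseq; case: (n) n1 => // k _ /=.
        by rewrite leNgt => /negP.
      by move=> /negP; rewrite -leNgt.
    rewrite probability_setC //.
    have hp : P (Useq X b n) = (fine (P (Useq X b n)))%:E by rewrite fineK ?fin_num_measure.
    by rewrite hp /Fseq -EFinB -EFinM (mulrC (tau n)).
  have : (\sum_(1 <= n < m) ((tau n * n%:R)%:E * P [set x | (b n <= `|X x|)%R]) <= Ser)%E.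
    apply: nneseries_lim_ge => n n1 _; apply: mule_ge0; last exact: measure_ge0.
    by rewrite lee_fin mulr_ge0 ?tau0.
  under eq_big_nat => n /andP[n1 _] do rewrite (E n n1).
  by rewrite sumEFin -(fineK finSer) lee_fin.
have H1' j m : (2 <= j)%N ->
    \sum_(j <= k < m) tau k * powR (k%:R / powR (b k) nu) theta <=
    C * Tsum tau j.-1 * powR (j%:R / powR (b j) nu) (theta - 1) / powR (b j) nu.
  move=> j2.
  have j1 : (1 <= j)%N := ltnW j2.
  have cj := c0 j j1.
  have bj := b0 j j1.
  set A := powR (b j) (nu * theta) / powR j%:R (theta - 1).
  have A0 : 0 < A by rewrite divr_gt0 // powR_gt0 // ?b0 // ltr0n (leq_trans _ j2).
  have part : (\sum_(j <= k < m) ((powR k%:R theta * tau k / powR (b k) (nu * theta))%:E) <=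
     \sum_(j <= k <oo) ((powR k%:R theta * tau k / powR (b k) (nu * theta))%:E))%E.
    apply: nneseries_lim_ge => k jk _; rewrite lee_fin.
    by rewrite !mulr_ge0 ?powR_ge0 ?tau0 ?invr_ge0 ?powR_ge0 // (leq_trans j1 jk).
  have HA := le_trans (lee_wpmul2l (ltW A0 : (0 <= A%:E)%E) part) (H1e j j2).
  rewrite sumEFin -EFinM lee_fin in HA.
  have Eterm k : (j <= k)%N -> tau k * powR (k%:R / powR (b k) nu) theta =
      powR k%:R theta * tau k / powR (b k) (nu * theta).
    move=> jk; have ck := c0 k (leq_trans j1 jk).
    by rewrite powR_div // powRrM; ring.
  rewrite (eq_big_nat _ _ (fun k hk => Eterm k (proj1 (andP hk)))).
  have ERHS : powR (j%:R / powR (b j) nu) (theta - 1) / powR (b j) nu = A^-1.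
    rewrite powR_div // /A invf_div.
    have <- : powR (powR (b j) nu) (theta - 1) * powR (b j) nu = powR (b j) (nu * theta).
      by rewrite mulrC mulr_powRB1 ?powRrM // ltW.
    by field; rewrite !gt_eqF ?powR_gt0.
  rewrite -mulrA ERHS.
  rewrite -(ler_pM2l A0) mulrCA mulfV ?gt_eqF // mulr1.
  exact: HA.
have [K HK] := @core R tau (fun n => powR (b n) nu) (Fseq X b)
  (fun n => trunc_moment X nu (b n)) C theta (fine Ser) tau0 c0 c12 Fmon F1 F0
  (fun n n1 => @ebound _ _ _ P X b nu n nu0 b0 bmon n1) C0 th1 H1' H2 HM.
apply: (le_lt_trans _ (ltry K)).
apply: lime_le.
  apply: is_cvg_nneseries => n n1 _; rewrite lee_fin mulr_ge0 ?tau0 ?powR_ge0 //.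
apply: nearW => m; rewrite sumEFin lee_fin; exact: HK.
Qed.
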